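(* Fix an integer $q \geq 3$ and a real $r \in [0,1]$. Then the function $F(t) = \left(c_q^{t}\, c_{q-1}^{1-t}\right)^{1/(q+t-r)}$ is decreasing on $t \in [0,1]$.
   Context: For integers $q \geq 1$, $c_q := \sqrt{\lfloor (q+2)^2/4 \rfloor}$. *)

(* Defs.v *)
From Stdlib Require Import Reals Lra Lia.
Open Scope R_scope.

Definition cq (q : nat) : R := sqrt (INR (((q + 2) * (q + 2)) / 4)%nat).

(* F(t) = (c_q^t * c_{q-1}^{1-t})^{1/(q+t-r)}, real powers via Rpower
   (bases are positive since c_k >= 1). *)
Definition Fqr (q : nat) (r t : R) : R :=
  Rpower (Rpower (cq q) t * Rpower (cq (q - 1)) (1 - t)) (1 / (INR q + t - r)).

(* Main.v *)
Require Import Defs.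
From Stdlib Require Import Reals.
From Stdlib Require Import Lra Lia.
Open Scope R_scope.

Lemma nat_facts q : (3<=q)%nat ->
  (4 * ((q-1+2)*(q-1+2)/4) >= q*(q+2))%nat /\
  (2*((q+2)*(q+2)/4) <= 2*((q-1+2)*(q-1+2)/4) + q+2)%nat /\
  ((q-1+2)*(q-1+2)/4 < (q+2)*(q+2)/4)%nat.
Proof.
intros H. replace (q-1+2)%nat with (q+1)%nat by lia.
destruct (Nat.Even_or_Odd q) as [[k Hk]|[k Hk]]; subst q.
- replace ((2*k+2)*(2*k+2))%nat with (((k+1)*(k+1))*4 + 0)%nat by ring.
  replace ((2*k+1)*(2*k+1))%nat with ((k*k+k)*4 + 1)%nat by ring.
  rewrite !Nat.div_add_l by lia. simpl. nia.
- replace ((2*k+1+2)*(2*k+1+2))%nat with ((k*k+3*k+2)*4 + 1)%nat by ring.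
  replace ((2*k+1+1)*(2*k+1+1))%nat with (((k+1)*(k+1))*4 + 0)%nat by ring.
  rewrite !Nat.div_add_l by lia. simpl. nia.
Qed.

Lemma ln_lt_sub1 x : 0 < x -> x <> 1 -> ln x < x - 1.
Proof.
intros Hx H1. pose proof (exp_ineq1 (ln x) (ln_neq_0 x H1 Hx)).
rewrite exp_ln in H by exact Hx. lra.
Qed.

Lemma key_real (q : nat) (M N : R) : (3 <= q)%nat ->
  4 * N >= INR q * (INR q + 2) -> 2 * M <= 2 * N + INR q + 2 -> N < M ->
  (q = 3%nat -> M = 6 /\ N = 4) -> (q = 4%nat -> M = 9 /\ N = 6) -> ((5 <= q)%nat -> 9 <= N) ->
  ln N < ln M /\ INR q * (ln M - ln N) < ln N.
Proof.
intros Hq H1 H2 H3 E3 E4 E5.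
assert (Hq3 : 3 <= INR q) by (assert (INR 3 <= INR q) by (apply le_INR; lia); simpl INR in *; lra).
assert (HN : 0 < N) by nra.
split. { apply ln_increasing; lra. }
destruct (Nat.eq_dec q 3) as [->|n3].
{ destruct (E3 eq_refl) as [-> ->]. simpl INR.
  assert (ln (6^3) < ln (4^4)) by (apply ln_increasing; lra).
  rewrite !ln_pow in H by lra. simpl INR in H. lra. }
destruct (Nat.eq_dec q 4) as [->|n4].
{ destruct (E4 eq_refl) as [-> ->]. simpl INR.
  assert (ln (9^4) < ln (6^5)) by (apply ln_increasing; lra).
  rewrite !ln_pow in H by lra. simpl INR in H. lra. }
assert (Hq5 : 5 <= INR q) by (assert (INR 5 <= INR q) by (apply le_INR; lia); simpl INR in *; lra).
assert (HN9 : 9 <= N) by (apply E5; lia).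
assert (Hl : ln M - ln N < M / N - 1).
{ replace (ln M - ln N) with (ln (M / N)).
  - apply ln_lt_sub1.
    + apply Rdiv_lt_0_compat; lra.
    + intro E. apply Rmult_eq_compat_r with (r := N) in E.
      unfold Rdiv in E. rewrite Rmult_assoc, Rinv_l in E by lra. lra.
  - unfold Rdiv. rewrite ln_mult, ln_Rinv by (try apply Rinv_0_lt_compat; lra). ring. }
assert (Hb : INR q * (M / N - 1) <= 2).
{ replace (M / N - 1) with ((M - N) / N) by (field; lra).
  apply Rmult_le_reg_r with N; [lra|].
  replace (INR q * ((M - N) / N) * N) with (INR q * (M - N)) by (field; lra).
  assert (0 <= INR q * ((INR q + 2) / 2 - (M - N))) by (apply Rmult_le_pos; lra).
  nra. }
assert (H2l : 2 <= ln N).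
{ replace 2 with (ln (exp 2)) by apply ln_exp.
  assert (exp 2 <= 9).
  { replace 2 with (1 + 1) by lra. rewrite exp_plus.
    pose proof exp_le_3. pose proof (exp_pos 1). nra. }
  destruct (Rle_lt_or_eq_dec _ _ H) as [h|h].
  - assert (ln (exp 2) < ln 9) by (apply ln_increasing; [apply exp_pos|lra]).
    assert (ln 9 <= ln N).
    { destruct (Rle_lt_or_eq_dec _ _ HN9) as [h'|h'].
      - left; apply ln_increasing; lra.
      - rewrite h'; lra. }
    lra.
  - rewrite h. destruct (Rle_lt_or_eq_dec _ _ HN9) as [h'|h'].
    + left; apply ln_increasing; lra.
    + rewrite h'; lra. }
nra.
Qed.

Lemma ln_sqrt_half x : 0 < x -> ln (sqrt x) = ln x / 2.
Proof.
intros Hx. assert (Hs : 0 < sqrt x) by (apply sqrt_lt_R0; exact Hx).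
rewrite <- (sqrt_sqrt x) at 2 by lra. rewrite ln_mult by exact Hs. field.
Qed.

Lemma frac_lt a b u v : 0 < u -> 0 < v -> a * v < b * u -> 1 / u * a < 1 / v * b.
Proof.
intros Hu Hv H.
replace (1 / u * a) with ((a * v) * / (u * v)) by (field; lra).
replace (1 / v * b) with ((b * u) * / (u * v)) by (field; lra).
apply Rmult_lt_compat_r; [apply Rinv_0_lt_compat; nra | exact H].
Qed.

Theorem corollary2p13 (q : nat) (r : R) :
  (3 <= q)%nat -> 0 <= r <= 1 ->
  forall s t : R, 0 <= s <= 1 -> 0 <= t <= 1 -> s < t ->
    Fqr q r t < Fqr q r s.
Proof.
intros Hq Hr s t Hs Ht Hst.
destruct (nat_facts q Hq) as [F1 [F2 F3]].
set (m := ((q + 2) * (q + 2) / 4)%nat) in *.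
set (n := ((q - 1 + 2) * (q - 1 + 2) / 4)%nat) in *.
assert (R1 : 4 * INR n >= INR q * (INR q + 2)).
{ apply Rle_ge. apply le_INR in F1. rewrite !mult_INR, !plus_INR in F1.
  simpl INR in F1. lra. }
assert (R2 : 2 * INR m <= 2 * INR n + INR q + 2).
{ apply le_INR in F2. rewrite !mult_INR, !plus_INR in F2. simpl INR in F2. rewrite ?plus_INR in F2. simpl INR in F2. lra. }
assert (R3 : INR n < INR m) by (apply lt_INR; exact F3).
assert (Hq3 : 3 <= INR q) by (assert (INR 3 <= INR q) by (apply le_INR; lia); simpl INR in *; lra).
destruct (key_real q (INR m) (INR n) Hq R1 R2 R3) as [K1 K2].
{ intros ->. replace m with 6%nat by (vm_compute; reflexivity). replace n with 4%nat by (vm_compute; reflexivity). simpl. split; lra. }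
{ intros ->. replace m with 9%nat by (vm_compute; reflexivity). replace n with 6%nat by (vm_compute; reflexivity). simpl. split; lra. }
{ intros H5. assert (9 <= n)%nat by nia. apply le_INR in H. simpl INR in H. lra. }
assert (Hn : 0 < INR n) by nra.
assert (Hm : 0 < INR m) by lra.
unfold Fqr, cq. fold m. fold n.
unfold Rpower. rewrite !ln_mult by apply exp_pos. rewrite !ln_exp.
rewrite !ln_sqrt_half by assumption.
apply exp_increasing. apply frac_lt; try lra.
set (A := ln (INR m)). set (B := ln (INR n)). fold A B in K1, K2.
set (X := INR q - r).
assert (HX : X <= INR q) by (unfold X; lra).
assert (K : 0 < B - X * (A - B)) by nra.
replace (INR q + t - r) with (X + t) by (unfold X; ring).
replace (INR q + s - r) with (X + s) by (unfold X; ring).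
assert (0 < (t - s) * (B - X * (A - B)) / 2) by (apply Rdiv_lt_0_compat; nra).
nra.
Qed.
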